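(* Let $\mu>0$ and let $f:[0,1]\to\mathbb{R}$ be bounded. Then $\lim_{n\to+\infty}\mathscr{L}_n^K f(x)=f(x)$ at every point $x\in[0,1]$ at which $f$ is continuous. Moreover, for every $f\in C([0,1])$, $\mathscr{L}_n^K f(x)\to f(x)$ as $n\to+\infty$ uniformly for $x\in[0,1]$.
   Context: Fix $\mu>0$. Let $\ln_\mu(x):=\ln(1+\mu+x)$ for $x\in[0,1]$, and for $f:[0,1]\to\mathbb{R}$ let $f_\mu(x):=f(x)/\ln_\mu(x)$. Let $p_{n,k}(y):=\binom{n}{k}y^k(1-y)^{n-k}$ and $a_{n+1}(x):=\dfrac{\ln\left(1+\frac{x}{(n+1)(1+\mu)}\right)}{\ln\left(1+\frac{1}{(n+1)(1+\mu)}\right)}$, $x\in[0,1]$. For $n\in\mathbb{N}$ define $\mathscr{L}_n^K f(x):=\ln_\mu(x)\sum_{k=0}^n p_{n,k}(a_{n+1}(x))\,(n+1)\int_{k/(n+1)}^{(k+1)/(n+1)} f_\mu(t)\,dt$, $x\in[0,1]$. *)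

(* Defs.v *)
From HB Require Import structures.
From mathcomp Require Import all_boot all_order all_algebra.
From mathcomp Require Import all_classical all_reals all_analysis.
Set Implicit Arguments. Unset Strict Implicit. Unset Printing Implicit Defensive.
Import Order.TTheory GRing.Theory Num.Theory.
Import numFieldNormedType.Exports.
Local Open Scope classical_set_scope.
Local Open Scope ring_scope.

Definition ln_mu {R : realType} (mu x : R) : R := ln (1 + mu + x).

Definition f_mu {R : realType} (mu : R) (f : R -> R) (x : R) : R :=
  f x / ln_mu mu x.

Definition bern {R : realType} (n k : nat) (y : R) : R :=
  'C(n, k)%:R * y ^+ k * (1 - y) ^+ (n - k).

Definition a_next {R : realType} (mu : R) (n : nat) (x : R) : R :=
  ln (1 + x / ((n.+1)%:R * (1 + mu))) / ln (1 + 1 / ((n.+1)%:R * (1 + mu))).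

Definition LK {R : realType} (mu : R) (n : nat) (f : R -> R) (x : R) : R :=
  ln_mu mu x *
  \sum_(k < n.+1)
     bern n k (a_next mu n x) *
     ((n.+1)%:R *
      Rintegral lebesgue_measure `[k%:R / (n.+1)%:R, (k.+1)%:R / (n.+1)%:R]
                (f_mu mu f)).

(* Main.v *)
Require Import Defs.
From HB Require Import structures.
From mathcomp Require Import all_boot all_order all_algebra.
From mathcomp Require Import all_classical all_reals all_analysis.
From mathcomp Require Import ring lra.
Import Order.TTheory GRing.Theory Num.Theory.
Import numFieldNormedType.Exports.
Local Open Scope classical_set_scope.
Local Open Scope ring_scope.

Definition Bs {R : realType} (n : nat) (F : nat -> R) (y : R) : R :=
  \sum_(k < n.+1) bern n k y * F k.

Lemma bern_gt {R : realType} n k (y : R) : (n < k)%N -> bern n k y = 0.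
Proof. by move=> nk; rewrite /bern bin_small // mul0r !mul0r. Qed.

Lemma bernS0 {R : realType} n (y : R) : bern n.+1 0 y = (1 - y) * bern n 0 y.
Proof. by rewrite /bern !bin0 !subn0 !expr0 !mul1r exprS. Qed.

Lemma bernSS {R : realType} n k (y : R) :
  bern n.+1 k.+1 y = y * bern n k y + (1 - y) * bern n k.+1 y.
Proof.
rewrite /bern binS natrD subSS.
case: (ltnP k n) => kn.
  have -> : (n - k = (n - k.+1).+1)%N by rewrite subnSK.
  rewrite !exprS; ring.
rewrite (@bin_small n k.+1) ?ltnS // mul0r !mul0r mulr0 addr0.
rewrite !exprS; ring.
Qed.

Lemma bump0S i : bump 0 i = i.+1.
Proof. by []. Qed.

Lemma Bs_rec {R : realType} n (F : nat -> R) y :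
  Bs n.+1 F y = y * Bs n (fun k => F k.+1) y + (1 - y) * Bs n F y.
Proof.
rewrite /Bs big_ord_recl /= bernS0.
under eq_bigr => i _ do rewrite bump0S bernSS mulrDl -(mulrA y) -(mulrA (1 - y)).
rewrite big_split /= -!mulr_sumr.
rewrite [X in _ = _ + _ * X]big_ord_recl /=.
under [X in _ = _ + _ * (_ + X)]eq_bigr => i _ do rewrite bump0S.
rewrite [X in _ + (_ + _ * X)]big_ord_recr /= (@bern_gt _ n n.+1) // mul0r addr0.
ring.
Qed.

Lemma Bs_ext {R : realType} n (F G : nat -> R) y :
  (forall k, F k = G k) -> Bs n F y = Bs n G y.
Proof. by move=> FG; apply: eq_bigr => i _; rewrite FG. Qed.

Lemma Bs_lin {R : realType} n (F G : nat -> R) a b y :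
  Bs n (fun k => a * F k + b * G k) y = a * Bs n F y + b * Bs n G y.
Proof.
rewrite /Bs !mulr_sumr -big_split /=; apply: eq_bigr => i _; ring.
Qed.

Lemma Bs0 {R : realType} n (y : R) : Bs n (fun _ => 1) y = 1.
Proof.
elim: n => [|n IH].
  by rewrite /Bs big_ord1 /bern bin0 !expr0 !mulr1.
by rewrite Bs_rec IH; ring.
Qed.

Lemma Bs1 {R : realType} n (y : R) : Bs n (fun k => k%:R) y = n%:R * y.
Proof.
elim: n => [|n IH].
  by rewrite /Bs big_ord1 /bern bin0 !expr0 !mulr1 /= mul1r mul0r.
rewrite (@Bs_rec R n) IH (@Bs_ext _ n _ (fun k => 1 * k%:R + 1 * 1)); last first.
  by move=> k; rewrite mul1r mulr1 -natr1.
by rewrite Bs_lin IH Bs0 -natr1; ring.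
Qed.

Lemma Bs2 {R : realType} n (y : R) :
  Bs n (fun k => k%:R ^+ 2) y = n%:R ^+ 2 * y ^+ 2 + n%:R * y * (1 - y).
Proof.
elim: n => [|n IH].
  by rewrite /Bs big_ord1 /bern bin0 !expr0 !mulr1 /= expr2 !mul0r mulr0 add0r.
rewrite (@Bs_rec R n) (@Bs_ext _ n _ (fun k => 1 * k%:R ^+ 2 + 1 * (2 * k%:R + 1 * 1))); last first.
  by move=> k; rewrite -natr1; ring.
have H := @Bs_lin R n (fun k => k%:R) (fun _ => 1) 2 1 y; simpl in H.
rewrite Bs_lin IH H Bs1 Bs0 -natr1; ring.
Qed.

Lemma bern_ge0 {R : realType} n k (y : R) : 0 <= y <= 1 -> 0 <= bern n k y.
Proof.
move=> /andP[y0 y1]; rewrite /bern.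
by rewrite !mulr_ge0 ?exprn_ge0 ?subr_ge0.
Qed.

Lemma Bs_var {R : realType} n (y : R) : 0 <= y <= 1 ->
  Bs n (fun k => (k%:R / n.+1%:R - y) ^+ 2) y <= n.+1%:R^-1.
Proof.
move=> /andP[y0 y1].
set h := n.+1%:R^-1.
have hn : h * n.+1%:R = 1 by rewrite mulVf.
rewrite (@Bs_ext _ n _ (fun k => 1 * (h^+2 * k%:R ^+ 2 + (- 2 * y * h) * (1 * k%:R + 0 * 1))
   + y ^+ 2 * 1)); last by move=> k; rewrite /h; ring.
have H1 := @Bs_lin R n (fun k => h^+2 * k%:R ^+ 2 + (- 2 * y * h) * (1 * k%:R + 0 * 1)) (fun _ => 1) 1 (y^+2) y.
simpl in H1; rewrite H1.
have H := @Bs_lin R n (fun k => k%:R ^+ 2) (fun k => 1 * k%:R + 0 * 1) (h ^+ 2) (- 2 * y * h) y.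
simpl in H. rewrite H.
have H2 := @Bs_lin R n (fun k => k%:R) (fun _ => 1) 1 0 y.
simpl in H2. rewrite H2 Bs0 Bs1 Bs2.
have -> : n%:R = n.+1%:R - 1 :> R by rewrite -natr1; ring.
set m := n.+1%:R.
have h0 : 0 < h by rewrite /h invr_gt0 ltr0n.
have e : h * m = 1 := hn.
have -> : 1 * (h ^+ 2 * ((m - 1) ^+ 2 * y ^+ 2 + (m - 1) * y * (1 - y)) +
    - 2 * y * h * (1 * ((m - 1) * y) + 0 * 1)) + y ^+ 2 * 1
   = h * (h * y ^+ 2 + (1 - h) * y * (1 - y)).
  have em : h ^+ 2 * m ^+ 2 = 1 by rewrite -exprMn e expr1n.
  have -> : h ^+ 2 * ((m - 1) ^+ 2 * y ^+ 2 + (m - 1) * y * (1 - y)) =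
     (h^+2 * m^+2) * y^+2 - 2 * (h * m) * h * y^+2 + h^+2 * y^+2 + (h * m) * h * y * (1 - y) - h^+2 * y * (1 - y) by ring.
  rewrite em e. have -> : - 2 * y * h * (1 * ((m - 1) * y) + 0 * 1) = -2 * (h * m) * y^+2 + 2 * h * y ^+ 2 by ring.
  rewrite e; ring.
have h1 : h <= 1.
  rewrite /h invf_le1 ?ltr0n // ler1n //.
rewrite -[X in _ <= X]mulr1; apply: ler_wpM2l; first exact: ltW.
have a1 : 0 <= h * (1 - y ^+ 2) by apply: mulr_ge0; [exact: ltW| nra].
have a2 : 0 <= (1 - h) * (1 - y * (1 - y)) by apply: mulr_ge0; [lra| nra].
nra.
Qed.

Lemma Bs_dev {R : realType} n (c B : nat -> R) a y : 0 <= y <= 1 ->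
  (forall k, (k <= n)%N -> `|c k - a| <= B k) -> `|Bs n c y - a| <= Bs n B y.
Proof.
move=> y01 cB.
have -> : Bs n c y - a = Bs n (fun k => 1 * c k + (- a) * 1) y.
  by rewrite Bs_lin Bs0; ring.
rewrite /Bs; apply: le_trans (ler_norm_sum _ _ _) _.
apply: ler_sum => i _; rewrite normrM ger0_norm ?bern_ge0 //.
apply: ler_wpM2l; first exact: bern_ge0.
rewrite mul1r mulr1; apply: cB; rewrite -ltnS; exact: ltn_ord.
Qed.

Lemma leb_itv {R : realType} (a b : R) : a < b ->
  lebesgue_measure (`[a, b] : set R) = (b - a)%:E.
Proof.
move=> ab; rewrite lebesgue_measure_itv /= lte_fin ab /=.
by rewrite -EFinD.
Qed.

Lemma avg_bound {R : realType} (g : R -> R) (a b lo hi : R) : a < b ->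
  measurable_fun (`[a, b] : set R) g ->
  (forall t, t \in `[a, b] -> lo <= g t <= hi) ->
  lo * (b - a) <= Rintegral lebesgue_measure `[a, b] g <= hi * (b - a).
Proof.
move=> ab mg gb.
have mD : measurable (`[a, b] : set R) by exact: measurable_itv.
have fin : (lebesgue_measure (`[a, b] : set R) < +oo)%E by rewrite leb_itv // ltry.
have ig : lebesgue_measure.-integrable `[a, b] (EFin \o g).
  apply: measurable_bounded_integrable => //.
  exists (`|lo| + `|hi|); split; first by rewrite realE; apply/orP; left; rewrite addr_ge0.
  move=> M hM t /= ht; have /andP[l h] := gb t ht.
  rewrite ler_norml; apply/andP; split.
    have : - `|lo| <= lo by rewrite lerNnormlW.
    have : 0 <= `|hi| by [].
    have : `|lo| + `|hi| < M := hM.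
    lra.
  have : hi <= `|hi| by rewrite ler_norm.
  have : 0 <= `|lo| by [].
  have : `|lo| + `|hi| < M := hM.
  lra.
have ic : forall c : R, lebesgue_measure.-integrable `[a, b] (EFin \o (fun=> c)).
  move=> c; apply: measurable_bounded_integrable => //.
  exists `|c|; split; first by rewrite realE normr_ge0.
  by move=> M hM t _ /=; apply: ltW.
apply/andP; split.
  rewrite -[X in X <= _](_ : Rintegral lebesgue_measure `[a, b] (fun=> lo) = _); last first.
    rewrite Rintegral_cst //; congr (_ * _); exact: (f_equal fine (@leb_itv R a b ab)).
  apply: (le_Rintegral _ (ic lo) ig) => //; last by move=> t ht; have /andP[] := gb t ht.
rewrite -[X in _ <= X](_ : Rintegral lebesgue_measure `[a, b] (fun=> hi) = _); last first.
  rewrite Rintegral_cst //; congr (_ * _); exact: (f_equal fine (@leb_itv R a b ab)).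
apply: (le_Rintegral _ ig (ic hi)) => //; last by move=> t ht; have /andP[] := gb t ht.
Qed.

Lemma ln_lb {R : realType} (v : R) : 0 <= v -> v / (1 + v) <= ln (1 + v).
Proof.
move=> v0.
have p : 0 < 1 + v by lra.
have := @le_ln1Dx R (- (v / (1 + v))).
have -> : 1 + - (v / (1 + v)) = (1 + v)^-1 by field; rewrite gt_eqF.
rewrite lnV ?posrE // lerN2; apply.
rewrite ltrNl opprK ltr_pdivrMr // mul1r; lra.
Qed.

Lemma a_next_prop {R : realType} (mu : R) n x : 0 < mu -> 0 <= x <= 1 ->
  0 <= a_next mu n x <= 1 /\ `|a_next mu n x - x| <= 2 * n.+1%:R^-1.
Proof.
move=> mu0 /andP[x0 x1].
set h := n.+1%:R^-1.
have h0 : 0 < h by rewrite /h invr_gt0 ltr0n.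
have h1 : h <= 1 by rewrite /h invf_le1 ?ltr0n // ler1n.
set u := 1 / (n.+1%:R * (1 + mu)).
have u0 : 0 < u by rewrite /u divr_gt0 // mulr_gt0 // ?ltr0n; lra.
have uh : u <= h.
  rewrite /u /h div1r invfM ler_piMr ?invr_gt0 ?ltr0n //.
  rewrite invf_le1; lra.
have -> : a_next mu n x = ln (1 + x * u) / ln (1 + u).
  by rewrite /a_next /u mulrA mulr1.
set A := ln (1 + x * u); set B := ln (1 + u).
have xu0 : 0 <= x * u by rewrite mulr_ge0 // ltW.
have B0 : 0 < B by rewrite /B ln_gt0 //; lra.
have A0 : 0 <= A by rewrite /A ln_ge0 //; lra.
have AB : A <= B.
  rewrite /A /B ler_ln ?posrE; try lra.
  rewrite lerD2l ger_pMl //.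
have Au : A <= x * u by rewrite /A le_ln1Dx //; lra.
have Bu : B <= u by rewrite /B le_ln1Dx //; lra.
have Al : x * u / (1 + x * u) <= A by exact: ln_lb.
have Bl : u / (1 + u) <= B by apply: ln_lb; exact: ltW.
have Al' : x * u <= A * (1 + x * u) by rewrite -ler_pdivrMr //; lra.
have Bl' : u <= B * (1 + u) by rewrite -ler_pdivrMr //; lra.
split.
  apply/andP; split; first by apply: divr_ge0 => //; exact: ltW.
  by rewrite ler_pdivrMr // mul1r.
have -> : A / B - x = (A - x * B) / B by field; rewrite gt_eqF.
rewrite normrM (gtr0_norm (x := B^-1)) ?invr_gt0 // ler_pdivrMr //.
apply: (@le_trans _ _ (2 * u * B)); last first.
  by apply: ler_wpM2r; [exact: ltW | apply: ler_wpM2l].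
rewrite ler_norml; apply/andP; split.
  have : x * B <= x * u by apply: ler_wpM2l.
  nra.
nra.
Qed.

Lemma sq3 {R : realType} (a b c : R) : (a + b + c) ^+ 2 <= 3 * (a ^+ 2 + b ^+ 2 + c ^+ 2).
Proof.
have : 0 <= (a - b) ^+ 2 + (b - c) ^+ 2 + (a - c) ^+ 2 by rewrite !addr_ge0 // sqr_ge0.
move=> H; nra.
Qed.

Lemma core {R : realType} (g : R -> R) (M eps del x y : R) n :
  measurable_fun (`[0, 1] : set R) g ->
  (forall t, t \in `[0, 1] -> `|g t| <= M) -> 0 < del -> 0 <= eps ->
  x \in `[0, 1] ->
  (forall t, t \in `[0, 1] -> `|t - x| < del -> `|g t - g x| <= eps) ->
  0 <= y <= 1 -> `|y - x| <= 2 * n.+1%:R^-1 ->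
  `|\sum_(k < n.+1) bern n k y * (n.+1%:R *
      Rintegral lebesgue_measure `[k%:R / n.+1%:R, k.+1%:R / n.+1%:R] g) - g x|
   <= eps + 36 * M / del ^+ 2 * n.+1%:R^-1.
Proof.
move=> mg gM d0 e0 x01 gc y01 yx.
set h := n.+1%:R^-1.
have h0 : 0 < h by rewrite /h invr_gt0 ltr0n.
have h1 : h <= 1 by rewrite /h invf_le1 ?ltr0n // ler1n.
have hn : n.+1%:R * h = 1 by rewrite /h mulfV.
have M0 : 0 <= M by apply: le_trans (gM 0 _); rewrite ?in_itv /= ?lexx ?ler01.
set C := 2 * M / del ^+ 2.
have C0 : 0 <= C by rewrite /C divr_ge0 ?mulr_ge0 ?exprn_ge0 // ltW.
set Bk := fun k : nat => eps + C * (3 * (5 * h ^+ 2 + (k%:R * h - y) ^+ 2)).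
set c := fun k : nat => n.+1%:R *
      Rintegral lebesgue_measure `[k%:R / n.+1%:R, k.+1%:R / n.+1%:R] g.
have -> : \sum_(k < n.+1) bern n k y * (n.+1%:R *
      Rintegral lebesgue_measure `[k%:R / n.+1%:R, k.+1%:R / n.+1%:R] g) = Bs n c y by [].
apply: le_trans (@Bs_dev R n c Bk (g x) y y01 _) _.
  move=> k kn.
  have kh : k%:R / n.+1%:R = k%:R * h by [].
  have kh1 : k.+1%:R / n.+1%:R = k%:R * h + h by rewrite /h -natr1; ring.
  have ab : (k%:R / n.+1%:R : R) < k.+1%:R / n.+1%:R by rewrite kh kh1 ltrDl.
  have a0 : 0 <= k%:R * h by rewrite mulr_ge0 // ltW.
  have b1 : k%:R * h + h <= 1.
    have H : k%:R + 1 <= n.+1%:R :> R by rewrite natr1 ler_nat ltnS.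
    rewrite -hn; nra.
  have sub : (`[k%:R / n.+1%:R, k.+1%:R / n.+1%:R] : set R) `<=` `[0, 1].
    move=> t /=; rewrite !in_itv /= kh kh1 => /andP[t1 t2].
    apply/andP; split; lra.
  have mgk : measurable_fun (`[k%:R / n.+1%:R, k.+1%:R / n.+1%:R] : set R) g.
    exact: (measurable_funS (measurable_itv _) sub mg).
  have pt : forall t, t \in `[k%:R / n.+1%:R, k.+1%:R / n.+1%:R] ->
      g x - Bk k <= g t <= g x + Bk k.
    move=> t tI.
    have t01 : t \in `[0, 1] by have := sub t tI.
    suff : `|g t - g x| <= Bk k.
      by rewrite ler_norml => /andP[] H1 H2; apply/andP; split; lra.
    move: tI; rewrite in_itv /= kh kh1 => /andP[t1 t2].
    have CP : 0 <= C * (3 * (5 * h ^+ 2 + (k%:R * h - y) ^+ 2)).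
      by rewrite mulr_ge0 // mulr_ge0 // addr_ge0 // ?sqr_ge0 // mulr_ge0 // sqr_ge0.
    case: (ltrP `|t - x| del) => tx.
      rewrite /Bk /=; apply: le_trans (gc t t01 tx) _; lra.
    have g2 : `|g t - g x| <= 2 * M.
      apply: le_trans (ler_normB _ _) _.
      have := gM t t01; have := gM x x01; lra.
    have sq : (t - x) ^+ 2 <= 3 * (5 * h ^+ 2 + (k%:R * h - y) ^+ 2).
      have := sq3 (t - k%:R * h) (k%:R * h - y) (y - x).
      have -> : t - k%:R * h + (k%:R * h - y) + (y - x) = t - x by ring.
      have : (y - x) ^+ 2 <= 4 * h ^+ 2.
        rewrite -real_normK ?num_real //.
        have : 0 <= `|y - x| by [].
        move: yx; rewrite -/h => yx.
        nra.
      have : (t - k%:R * h) ^+ 2 <= h ^+ 2 by nra.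
      lra.
    have dd : del ^+ 2 <= (t - x) ^+ 2.
      rewrite -real_normK ?num_real //; nra.
    have q1 : 1 <= (t - x) ^+ 2 / del ^+ 2.
      by rewrite ler_pdivlMr ?exprn_gt0 // mul1r.
    have : 2 * M <= C * (t - x) ^+ 2.
      rewrite /C -mulrA [_^-1 * _]mulrC.
      rewrite -[X in X <= _]mulr1; apply: ler_wpM2l => //; rewrite mulr_ge0 //.
    have : C * (t - x) ^+ 2 <= C * (3 * (5 * h ^+ 2 + (k%:R * h - y) ^+ 2)).
      by apply: ler_wpM2l.
    rewrite /Bk /=; lra.
  have := @avg_bound R g _ _ _ _ ab mgk pt.
  rewrite kh1 kh -/h (_ : k%:R * h + h - k%:R * h = h); last by ring.
  move=> /andP[L U].
  rewrite /c /= kh kh1 ler_norml; apply/andP; split.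
    have := ler_wpM2l (ltW (ltr0Sn R n)) L; rewrite mulrA (mulrC _ (_ - _)) -mulrA hn mulr1.
    lra.
  have := ler_wpM2l (ltW (ltr0Sn R n)) U; rewrite mulrA (mulrC _ (_ + _)) -mulrA hn mulr1.
  lra.
rewrite (@Bs_ext _ n Bk (fun k => eps * 1 + (3 * C) * ((5 * h ^+ 2) * 1 + 1 * (k%:R / n.+1%:R - y) ^+ 2))); last first.
  by move=> k; rewrite /Bk /h /=; ring.
rewrite Bs_lin Bs0.
have H := @Bs_lin R n (fun _ => 1) (fun k => (k%:R / n.+1%:R - y) ^+ 2) (5 * h ^+ 2) 1 y.
simpl in H; rewrite H Bs0.
have V := @Bs_var R n y y01.
have -> : 36 * M / del ^+ 2 * n.+1%:R^-1 = 3 * C * (6 * h) by rewrite /C /h; ring.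
rewrite mulr1 lerD2l; apply: ler_wpM2l; first by rewrite mulr_ge0.
have : h ^+ 2 <= h by rewrite expr2 ger_pMl.
rewrite -/h in V; lra.
Qed.

Lemma hcont {R : realType} (mu t : R) : 0 < mu -> -mu < t ->
  {for t, continuous (fun s => (ln_mu mu s)^-1)}.
Proof.
move=> mu0 tm.
have p : 1 < 1 + mu + t by lra.
apply: continuousV.
  by rewrite /ln_mu gt_eqF // ln_gt0.
have c1 : {for t, continuous (fun s : R => 1 + mu + s)}.
  by apply: cvgD; [exact: cvg_cst | exact: cvg_id].
have c2 : {for (1 + mu + t), continuous (@ln R)} by apply: continuous_ln; lra.
exact: (continuous_comp c1 c2).
Qed.

Lemma hmeas {R : realType} (mu : R) : 0 < mu ->
  measurable_fun (`[0, 1] : set R) (fun s => (ln_mu mu s)^-1).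
Proof.
move=> mu0.
have sub : (`[0, 1] : set R) `<=` `]-mu, +oo[.
  move=> t /=; rewrite !in_itv /= andbT => /andP[t0 _]; lra.
apply: (measurable_funS _ sub).
  exact: measurable_itv.
apply: measurable_realfun.open_continuous_measurable_fun.
  exact: interval_open.
move=> t; rewrite inE /= in_itv /= andbT => tm.
exact: hcont.
Qed.

Lemma gmeas {R : realType} (mu : R) (f : R -> R) : 0 < mu ->
  measurable_fun (`[0, 1] : set R) f -> measurable_fun (`[0, 1] : set R) (f_mu mu f).
Proof.
move=> mu0 mf.
have -> : f_mu mu f = f \* (fun s => (ln_mu mu s)^-1) by [].
apply: measurable_realfun.measurable_funM; [exact: mf | exact: hmeas].
Qed.

Lemma gcvg {R : realType} (mu : R) (f : R -> R) (x : R) : 0 < mu -> x \in `[0, 1] ->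
  f @ within (`[0, 1] : set R) (nbhs x) --> f x ->
  f_mu mu f @ within (`[0, 1] : set R) (nbhs x) --> f_mu mu f x.
Proof.
move=> mu0 x01 cf.
have x0 : -mu < x by move: x01; rewrite in_itv /= => /andP[? _]; lra.
apply: (cvgM cf).
apply: cvg_within_filter.
exact: hcont.
Qed.

Lemma gdelta {R : realType} (g : R -> R) x eps : 0 < eps ->
  g @ within (`[0, 1] : set R) (nbhs x) --> g x ->
  exists2 del, 0 < del &
    forall t, t \in `[0, 1] -> `|t - x| < del -> `|g t - g x| <= eps.
Proof.
move=> e0 /cvgrPdist_lt /(_ eps e0) H.
move: H; rewrite /within /= => /nbhs_ballP [del d0 H].
exists del => // t t01 tx.
have := H t; rewrite /ball /= distrC => /(_ tx) /(_ t01).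
by rewrite distrC => /ltW.
Qed.

Lemma LK_est {R : realType} (mu : R) (f : R -> R) M x n eps del : 0 < mu ->
  measurable_fun (`[0, 1] : set R) f ->
  (forall t, t \in `[0, 1] -> `|f t| <= M) -> 0 < del -> 0 <= eps ->
  x \in `[0, 1] ->
  (forall t, t \in `[0, 1] -> `|t - x| < del -> `|f_mu mu f t - f_mu mu f x| <= eps) ->
  `|LK mu n f x - f x| <=
    ln (2 + mu) * (eps + 36 * (M / ln (1 + mu)) / del ^+ 2 * n.+1%:R^-1).
Proof.
move=> mu0 mf fM d0 e0 x01 gc.
have x01' : 0 <= x <= 1 by move: x01; rewrite in_itv.
have [y01 yx] := @a_next_prop R mu n x mu0 x01'.
have l0 : 0 < ln (1 + mu) by rewrite ln_gt0 //; lra.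
have lt : forall t, t \in `[0, 1] -> ln (1 + mu) <= ln_mu mu t.
  move=> t; rewrite in_itv /= => /andP[t0 t1].
  rewrite /ln_mu ler_ln ?posrE; lra.
have lx : 0 < ln_mu mu x by apply: lt_le_trans (lt x x01).
have lxL : ln_mu mu x <= ln (2 + mu).
  move: x01'; rewrite /ln_mu => /andP[x0 x1]; rewrite ler_ln ?posrE; lra.
have gM : forall t, t \in `[0, 1] -> `|f_mu mu f t| <= M / ln (1 + mu).
  move=> t t01; have := lt t t01; have := fM t t01.
  have lt0 : 0 < ln_mu mu t by apply: lt_le_trans (lt t t01).
  rewrite /f_mu normrM normfV (gtr0_norm lt0) => H1 H2.
  rewrite ler_pdivrMr //.
  have M0 : 0 <= M by apply: le_trans H1.
  apply: le_trans H1 _.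
  rewrite -mulrA -[X in X <= _]mulr1; apply: ler_wpM2l => //.
  by rewrite ler_pdivlMl // mulr1.
have C := @core R (f_mu mu f) _ _ _ _ _ n (@gmeas R mu f mu0 mf) gM d0 e0 x01 gc y01 yx.
have -> : LK mu n f x - f x = ln_mu mu x *
   (\sum_(k < n.+1) bern n k (a_next mu n x) * (n.+1%:R *
      Rintegral lebesgue_measure `[k%:R / n.+1%:R, k.+1%:R / n.+1%:R] (f_mu mu f)) - f_mu mu f x).
  by rewrite /LK /f_mu mulrBr; congr (_ - _); field; rewrite gt_eqF.
rewrite normrM (gtr0_norm lx); apply: ler_pM => //; exact: ltW.
Qed.

Lemma event {R : realType} (L E e : R) : 0 < L -> 0 <= E -> 0 < e ->
  \forall n \near \oo, L * (e / (3 * L) + E * n.+1%:R^-1) < e.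
Proof.
move=> L0 E0 e0.
near=> n.
have hn : 3 * L * E / e < n%:R by near: n; exact: nbhs_infty_gtr.
have m0 : 0 < n.+1%:R :> R by rewrite ltr0n.
have hm : 3 * L * E < e * n.+1%:R.
  move: hn; rewrite ltr_pdivrMr // => hn.
  apply: lt_le_trans hn _; rewrite mulrC; apply: ler_wpM2l; [exact: ltW | by rewrite ler_nat].
rewrite mulrDr.
have -> : L * (e / (3 * L)) = e / 3 by field; rewrite gt_eqF.
have : L * (E * n.+1%:R^-1) < e / 3.
  rewrite mulrA ltr_pdivrMr //; lra.
move=> H; apply: (lt_le_trans (y := e / 3 + e / 3)); first by rewrite ltrD2l.
lra.
Unshelve. all: by end_near.
Qed.

Theorem theorem3p1 (R : realType) (mu : R) (hmu : 0 < mu) :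
  (forall f : R -> R,
     measurable_fun (`[0, 1] : set R) f ->
     (exists M : R, forall t, t \in `[0, 1] -> `|f t| <= M) ->
     forall x : R, x \in `[0, 1] ->
       f @ within (`[0, 1] : set R) (nbhs x) --> f x ->
       (fun n => LK mu n f x) @ \oo --> f x)
  /\
  (forall f : R -> R,
     {within (`[0, 1] : set R), continuous f} ->
     forall eps : R, 0 < eps ->
       \forall n \near \oo, forall x : R, x \in `[0, 1] ->
         `|LK mu n f x - f x| < eps).
Proof.
have L0 : 0 < ln (2 + mu) by rewrite ln_gt0 //; lra.
have l0 : 0 < ln (1 + mu) by rewrite ln_gt0 //; lra.
split.
  move=> f mf [M fM] x x01 cf.
  have M0 : 0 <= M by apply: le_trans (fM 0 _); rewrite ?in_itv /= ?lexx ?ler01.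
  apply/cvgrPdist_lt => e e0.
  have ep : 0 < e / (3 * ln (2 + mu)) by rewrite divr_gt0 // mulr_gt0.
  have [del d0 gc] := @gdelta R (f_mu mu f) x _ ep (@gcvg R mu f x hmu x01 cf).
  have E0 : 0 <= 36 * (M / ln (1 + mu)) / del ^+ 2.
    apply: divr_ge0; last by rewrite exprn_ge0 // ltW.
    by apply: mulr_ge0 => //; apply: divr_ge0 => //; exact: ltW.
  near=> n.
  rewrite distrC.
  apply: le_lt_trans (@LK_est R mu f M x n _ del hmu mf fM d0 (ltW ep) x01 gc) _.
  near: n; exact: event.
move=> f cf e e0.
have cf' := (subspace_continuousP _ _).1 cf.
have mf : measurable_fun (`[0, 1] : set R) f.
  apply: measurable_realfun.subspace_continuous_measurable_fun => //.

have [c c01 cmax] : exists2 c, c \in `[0, 1] & forall t, t \in `[0, 1] -> `|f t| <= `|f c|.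
  apply: (@EVT_max R (fun t => `|f t|) 0 1); first exact: ler01.
  move=> t; apply: continuous_comp; first exact: cf.
  exact: norm_continuous.
set M := `|f c|.
have M0 : 0 <= M by rewrite /M normr_ge0.
have ep : 0 < e / (3 * ln (2 + mu)) by rewrite divr_gt0 // mulr_gt0.
set eps := e / (3 * ln (2 + mu)).
have NC := (near_covering_withinP _).2 ((compact_near_coveringP _).1 (@segment_compact R 0 1)).
apply: (NC _ _ (fun n x => `|LK mu n f x - f x| < e)).
move=> x x01.
have ep2 : 0 < eps / 2 by rewrite divr_gt0.
have [del d0 gc] := @gdelta R (f_mu mu f) x _ ep2 (@gcvg R mu f x hmu x01 (cf' x x01)).
have d2 : 0 < del / 2 by rewrite divr_gt0.
have E0 : 0 <= 36 * (M / ln (1 + mu)) / (del / 2) ^+ 2.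
  apply: divr_ge0; last by rewrite exprn_ge0 // ltW.
    by apply: mulr_ge0 => //; apply: divr_ge0 => //; exact: ltW.
near=> x' n => x'01.
have xx' : `|x' - x| < del / 2.
  near: x'; apply/nbhs_ballP; exists (del / 2) => // z; rewrite /ball /= distrC //.
have gc' : forall t, t \in `[0, 1] -> `|t - x'| < del / 2 ->
    `|f_mu mu f t - f_mu mu f x'| <= eps.
  move=> t t01 tx'.
  have tx : `|t - x| < del.
    have -> : t - x = (t - x') + (x' - x) by ring.
    apply: le_lt_trans (ler_normD _ _) _; lra.
  have H1 := gc t t01 tx.
  have H2 := gc x' x'01 (lt_trans xx' _).
  have -> : f_mu mu f t - f_mu mu f x' = (f_mu mu f t - f_mu mu f x) - (f_mu mu f x' - f_mu mu f x) by ring.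
  apply: le_trans (ler_normB _ _) _.
  have := H2 _; lra.
apply: le_lt_trans (@LK_est R mu f M x' n _ (del / 2) hmu mf cmax d2 (ltW ep) x'01 gc') _.
near: n; exact: event.
Unshelve. all: by end_near.
Qed.
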